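(* Let $\mathcal{A}$ be a pOC with state set $Q$ whose underlying chain $\mathcal{X}$ is strongly connected, and let $t$ be its trend. There is a vector $v\in\mathbb{R}^Q$ with the following two properties. - For every initial configuration, the process $m^{(0)},m^{(1)},\dots$ on runs of $\mathcal{M}_\mathcal{A}$ defined by $$m^{(i)}=\begin{cases}c^{(i)}+v_{p^{(i)}}-i\cdot t & \text{if } c^{(j)}\ge1 \text{ for all } 0\le j<i,\\ m^{(i-1)} & \text{otherwise}\end{cases}$$ is a martingale. Here $p^{(i)}$ and $c^{(i)}$ are the control state and counter value of the $i$-th configuration of the run. - $v_{\max}-v_{\min}\le 2|Q|/x_{\min}^{|Q|}$, where $x_{\min}$ is the smallest positive transition probability in $\mathcal{X}$, and $v_{\max}$ and $v_{\min}$ are the maximal and minimal components of $v$.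
   Context: A pOC is $\mathcal{A}=(Q,\delta^{=0},\delta^{>0},P^{=0},P^{>0})$ with the following components. - $\delta^{>0}\subseteq Q\times\{-1,0,1\}\times Q$ are the positive rules and $\delta^{=0}\subseteq Q\times\{0,1\}\times Q$ are the zero rules. Every state has both kinds of outgoing rule. - $P^{>0}$ and $P^{=0}$ are positive probability distributions over the outgoing rules of each state. $\mathcal{M}_\mathcal{A}$ is the Markov chain on configurations $p(i)$ with the following transitions: - $p(0)\to q(c)$ with probability $P^{=0}(p,c,q)$; - for $i\ge1$, $p(i)\to q(i+c)$ with probability $P^{>0}(p,c,q)$. $\mathcal{X}$ is the finite Markov chain on $Q$ with transition matrix $A_{pq}=\sum_cP^{>0}(p,c,q)$. With $\alpha$ its invariant distribution and $s_p=\sum_{(p,c,q)\in\delta^{>0}}P^{>0}(p,c,q)c$, the trend is $t=\alpha s$. *)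

(* Defs.v *)
From mathcomp Require Import all_boot all_order all_algebra.
From mathcomp Require Import reals.
Set Implicit Arguments. Unset Strict Implicit. Unset Printing Implicit Defensive.
Import Order.TTheory GRing.Theory Num.Theory.
Local Open Scope ring_scope.

(* Rules are encoded by their probabilities: a rule (p,c,q) exists iff its
   probability is nonzero; counter changes are integers c.
   Pz p c q = P^{=0}(p,c,q), Pp p c q = P^{>0}(p,c,q). *)
Record pOC (Q : finType) (R : realType) := POC {
  Pz : Q -> int -> Q -> R;
  Pp : Q -> int -> Q -> R;
  Pz_ge0 : forall p c q, 0 <= Pz p c q;
  Pp_ge0 : forall p c q, 0 <= Pp p c q;
  Pz_supp : forall p c q, Pz p c q != 0 -> (c == 0%Z) || (c == 1%Z);
  Pp_supp : forall p c q, Pp p c q != 0 -> [|| c == (-1)%Z, c == 0%Z | c == 1%Z];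
  Pz_sum : forall p, \sum_(c <- [:: 0%Z; 1%Z]) \sum_(q : Q) Pz p c q = 1;
  Pp_sum : forall p, \sum_(c <- [:: (-1)%Z; 0%Z; 1%Z]) \sum_(q : Q) Pp p c q = 1
}.

Section POC.
Variables (Q : finType) (R : realType) (A : pOC Q R).

Definition config := (Q * nat)%type.

Definition step (x y : config) : R :=
  let d := (y.2%:Z - x.2%:Z)%R in
  if x.2 == 0%N then Pz A x.1 d y.1
  else Pp A x.1 d y.1.

Definition next_counters (c : nat) : seq nat :=
  if c is 0 then [:: 0%N; 1%N] else [:: c.-1; c; c.+1].

Definition Xmat (p q : Q) : R := \sum_(c <- [:: (-1)%Z; 0%Z; 1%Z]) Pp A p c q.

Definition strongly_connected : Prop :=
  forall p q : Q, connect [rel a b | 0 < Xmat a b] p q.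

Definition invariant_distribution (alpha : Q -> R) : Prop :=
  (forall p, 0 <= alpha p) /\ \sum_(p : Q) alpha p = 1 /\
  (forall q, \sum_(p : Q) alpha p * Xmat p q = alpha q).

Definition drift (p : Q) : R :=
  \sum_(c <- [:: (-1)%Z; 0%Z; 1%Z]) \sum_(q : Q) Pp A p c q * c%:~R.

Definition trend (alpha : Q -> R) : R := \sum_(p : Q) alpha p * drift p.

(* smallest positive transition probability of X (all entries are <= 1) *)
Definition xmin : R :=
  \big[Num.min/1]_(pq : Q * Q | 0 < Xmat pq.1 pq.2) Xmat pq.1 pq.2.

(* The process m^{(i)} evaluated on a run prefix s = x^{(0)} ... x^{(n)}
   (with i <= n); x^{(j)} = nth x0 s j. *)
Fixpoint mproc (x0 : config) (v : Q -> R) (t : R) (s : seq config) (i : nat) : R :=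
  let x := nth (head x0 s) s in
  let val j := ((x j).2)%:R + v (x j).1 - j%:R * t in
  match i with
  | 0 => val 0%N
  | i'.+1 => if all (fun j => 0 < (x j).2)%N (iota 0 i) then val i
             else mproc x0 v t s i'
  end.

(* A process X (X i s = value at time i on a run with prefix s of length
   i+1) is a martingale for runs from x0: for every finite prefix of positive
   probability, the conditional expectation of the next value given the
   prefix equals the current value.  Integrability is automatic since
   there are finitely many prefixes of each length. *)
Definition martingale_from (X : nat -> seq config -> R) (x0 : config) : Prop :=
  forall rest : seq config,
    path (fun a b => 0 < step a b) x0 rest ->
    let s := x0 :: rest in
    let x := last x0 rest in
    \sum_(c <- next_counters x.2) \sum_(q : Q)
        step x (q, c) * X (size rest).+1 (rcons s (q, c))
    = X (size rest) s.

End POC.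

(* Main.v *)
Require Import Defs.
From mathcomp Require Import all_boot all_order all_algebra.
From mathcomp Require Import reals.
From mathcomp Require Import ring lra zify.
Set Implicit Arguments. Unset Strict Implicit. Unset Printing Implicit Defensive.
Import Order.TTheory GRing.Theory Num.Theory.
Local Open Scope ring_scope.

Lemma Xmat_ge0 (Q : finType) (R : realType) (A : pOC Q R) p q : 0 <= Xmat A p q.
Proof. by rewrite /Xmat; apply: sumr_ge0 => c _; exact: Pp_ge0. Qed.

Lemma Xmat_sum (Q : finType) (R : realType) (A : pOC Q R) p : \sum_q Xmat A p q = 1.
Proof.
rewrite -(Pp_sum A p) /Xmat; exact: exchange_big.
Qed.

Lemma xmin_gt0 (Q : finType) (R : realType) (A : pOC Q R) : 0 < xmin A.
Proof.
rewrite /xmin; apply: (big_ind (fun x => 0 < x)) => //.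
by move=> a b Ha Hb; rewrite lt_min Ha Hb.
Qed.

Lemma xmin_le1 (Q : finType) (R : realType) (A : pOC Q R) : xmin A <= 1.
Proof. exact: bigmin_le_id. Qed.

Lemma xmin_le (Q : finType) (R : realType) (A : pOC Q R) p q :
  0 < Xmat A p q -> xmin A <= Xmat A p q.
Proof. move=> H; exact: (bigmin_le_cond _ (P := fun pq : Q * Q => 0 < Xmat A pq.1 pq.2) (j := (p, q))). Qed.

Lemma drift_le1 (Q : finType) (R : realType) (A : pOC Q R) p : `|drift A p| <= 1.
Proof.
have := Pp_sum A p; rewrite /drift !big_cons !big_nil !addr0 => H.
have h1 : \sum_q Pp A p (-1)%Z q * (-1)%:~R = - \sum_q Pp A p (-1)%Z q.
  by rewrite -sumrN; apply: eq_bigr => q _; rewrite mulrN1.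
have h2 : \sum_q Pp A p 0%Z q * 0%:~R = 0 by rewrite big1 // => q _; rewrite mulr0.
have h3 : \sum_q Pp A p 1%Z q * 1%:~R = \sum_q Pp A p 1%Z q.
  by apply: eq_bigr => q _; rewrite mulr1.
have g1 : 0 <= \sum_q Pp A p (-1)%Z q by apply: sumr_ge0 => q _; exact: Pp_ge0.
have g2 : 0 <= \sum_q Pp A p 0%Z q by apply: sumr_ge0 => q _; exact: Pp_ge0.
have g3 : 0 <= \sum_q Pp A p 1%Z q by apply: sumr_ge0 => q _; exact: Pp_ge0.
rewrite h1 h2 h3 ler_norml; apply/andP; split; lra.
Qed.
Lemma maxp (Q : finType) (R : realType) (A : pOC Q R) :
  strongly_connected A -> forall (z : Q -> R) (q : Q) (a : R),
  0 <= a -> z q = 0 -> (forall p, p != q -> z p <= a + \sum_r Xmat A p r * z r) ->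
  forall p, z p <= a * #|Q|%:R / xmin A ^+ #|Q|.
Proof.
move=> Hsc z q a Ha Hzq Hz p.
set x := xmin A.
have x0 : 0 < x := xmin_gt0 A.
have x1 : x <= 1 := xmin_le1 A.
set y := x^-1.
have y1 : 1 <= y by rewrite /y invf_ge1.
set M := z [arg max_(i > q) z i]%O.
have HM : forall r, z r <= M.
  move=> r; rewrite /M; case: (arg_maxP z (P := predT) (i0 := q) isT) => i _ Hi.
  exact: Hi.
have Hstep : forall r r', r != q -> 0 < Xmat A r r' -> M - z r' <= (a + (M - z r)) * y.
  move=> r r' Hr Hpos.
  have Hs : \sum_s Xmat A r s * z s <= Xmat A r r' * z r' + (1 - Xmat A r r') * M.
    have e : 1 - Xmat A r r' = \sum_(s | s != r') Xmat A r s.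
      by rewrite -(Xmat_sum A r) (bigD1 r') //= addrAC subrr add0r.
    rewrite (bigD1 r') //= e lerD2l.
    rewrite mulr_suml; apply: ler_sum => s _; apply: ler_wpM2l; [exact: Xmat_ge0| exact: HM].
  have := Hz r Hr; have := xmin_le Hpos; have := HM r'; rewrite -/x => h1 h2 h3.
  have h4 : x * (M - z r') <= a + (M - z r) by nra.
  by rewrite /y ler_pdivlMr // mulrC.
pose f (i : nat) := a * i%:R * y ^+ i.
have Hpath : forall s r i, path [rel a b | 0 < Xmat A a b] r s -> uniq (r :: s) ->
    last r s = q -> M - z r <= f i -> M - z q <= f (i + size s)%N.
  elim=> [|r' s IH] r i /=; first by rewrite addn0 => _ _ ->.
  move=> /andP[Hrr' Hp] /andP[Hnr Hu] Hl Hi.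
  have Hrq : r != q.
    apply/eqP => Erq; move: Hnr; rewrite Erq -Hl.
    by rewrite (mem_last r' s).
  rewrite addnS -addSn; apply: (IH r')=> //.
  apply: le_trans (Hstep _ _ Hrq Hrr') _.
  rewrite /f exprS -addn1 natrD.
  have := exprn_ege1 i y1; have : 0 <= y by lra.
  move: Hi; rewrite /f => Hi h h'.
  have e1 : 0 <= a * y by apply: mulr_ge0.
  have e2 : a * y <= a * y * y ^+ i by rewrite ler_peMr.
  have e3 : (M - z r) * y <= a * i%:R * y ^+ i * y by rewrite ler_wpM2r.
  nra.
have [s Hs Hl] : exists2 s, path [rel a b | 0 < Xmat A a b] [arg max_(i > q) z i]%O s & q = last [arg max_(i > q) z i]%O s.
  exact/connectP/Hsc.
case: (shortenP Hs) Hl => s' Hp' Hu' _ Hl.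
have := Hpath s' _ 0%N Hp' Hu' (esym Hl).
rewrite add0n Hzq subr0 => /(_ _) HMs.
have {}HMs := HMs (_ : _ <= _); rewrite subrr /f mulr0 mul0r lexx in HMs.
have {}HMs := HMs isT.
have Hsz : (size s' < #|Q|)%N.
  have := max_card (mem ([arg max_(i > q) z i]%O :: s')).
  by rewrite (card_uniqP Hu').
apply: le_trans (HM p) _; apply: le_trans HMs _.
rewrite -exprVn -/y.
have : (size s')%:R <= #|Q|%:R :> R by rewrite ler_nat ltnW.
have := ler_weXn2l y1 (ltnW Hsz).
have := exprn_ege1 (size s') y1.
move=> h1 h2 h3; rewrite /f; apply: ler_pM.
- by apply: mulr_ge0.
- lra.
- by apply: ler_wpM2l.
- by [].
Qed.

Lemma poisson (Q : finType) (R : realType) (A : pOC Q R) :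
  strongly_connected A -> forall (w : Q -> R) (q0 : Q),
  exists u : Q -> R, u q0 = 0 /\
    forall p, p != q0 -> u p = w p + \sum_r Xmat A p r * u r.
Proof.
move=> Hsc w q0.
pose Y (p r : Q) := if p == q0 then 0 else Xmat A p r.
pose M : 'M[R]_#|Q| := \matrix_(i, j) ((i == j)%:R - Y (enum_val j) (enum_val i)).
have key : forall (u : 'rV[R]_#|Q|) j,
    (u *m M) 0 j = u 0 j - \sum_r Y (enum_val j) r * u 0 (enum_rank r).
  move=> u j; rewrite mxE.
  rewrite (reindex (@enum_val Q Q)) /=; last exact/onW_bij/enum_val_bij.
  under [X in _ = _ - X]eq_bigr do rewrite enum_valK.
  under eq_bigr do rewrite mxE mulrBr.
  rewrite sumrB; congr (_ - _); last by apply: eq_bigr => i _; rewrite mulrC.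
  rewrite (bigD1 j) //= eqxx mulr1 big1 ?addr0 // => i /negbTE ->; by rewrite mulr0.
have inj : forall u : 'rV[R]_#|Q|, u *m M = 0 -> u = 0.
  move=> u Hu; pose z p := u 0 (enum_rank p).
  have Hz : forall p, z p = \sum_r Y p r * z r.
    move=> p; apply/eqP; rewrite -subr_eq0; apply/eqP.
    by have := key u (enum_rank p); rewrite Hu mxE enum_rankK => <-.
  have zq : z q0 = 0 by rewrite Hz big1 // => r _; rewrite /Y eqxx mul0r.
  have Hle : forall p, z p <= 0.
    move=> p; have := maxp Hsc (lexx 0) zq _ p; rewrite !mul0r; apply.
    by move=> p' Hp'; rewrite add0r Hz /Y (negbTE Hp').
  have Hge : forall p, - z p <= 0.
    move=> p; have := maxp Hsc (z := fun p => - z p) (q := q0) (lexx 0) _ _ p; rewrite !mul0r; apply.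
      by rewrite zq oppr0.
    move=> p' Hp'; rewrite add0r Hz /Y (negbTE Hp') -sumrN.
    by apply: ler_sum => r _; rewrite mulrN.
  apply/rowP => j; rewrite mxE -(enum_valK j) -/(z _).
  apply/eqP; rewrite eq_le Hle /=; have := Hge (enum_val j); lra.
have fr : row_free M.
  rewrite -kermx_eq0; apply/eqP/row_matrixP => i; rewrite row0; apply: inj.
  by rewrite -row_mul mulmx_ker row0.
have unit : M \in unitmx by rewrite -row_free_unit.
pose b : 'rV[R]_#|Q| := \row_j (if enum_val j == q0 then 0 else w (enum_val j)).
pose u := b *m invmx M.
have Hu : u *m M = b by rewrite /u mulmxKV.
exists (fun p => u 0 (enum_rank p)); split.
  have := key u (enum_rank q0); rewrite Hu mxE enum_rankK eqxx.
  rewrite big1 ?subr0 // => r _; by rewrite /Y eqxx mul0r.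
move=> p Hp; have := key u (enum_rank p); rewrite Hu mxE enum_rankK (negbTE Hp).
rewrite /Y (negbTE Hp) => ->; ring.
Qed.

Lemma stepP (Q : finType) (R : realType) (A : pOC Q R) p k q :
  [/\ step A (p, k.+1) (q, k) = Pp A p (-1)%Z q,
      step A (p, k.+1) (q, k.+1) = Pp A p 0%Z q,
      step A (p, k.+1) (q, k.+2) = Pp A p 1%Z q,
      step A (p, 0%N) (q, 0%N) = Pz A p 0%Z q &
      step A (p, 0%N) (q, 1%N) = Pz A p 1%Z q].
Proof.
rewrite /step /=; split => //; congr Pp; lia.
Qed.

Lemma step_sum (Q : finType) (R : realType) (A : pOC Q R) (x : config Q) :
  \sum_(c <- next_counters x.2) \sum_q step A x (q, c) = 1.
Proof.
case: x => p [|k] /=.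
  rewrite -(Pz_sum A p) !big_cons !big_nil; congr (_ + (_ + _));
  by apply: eq_bigr => q _; case: (stepP A p 0 q).
rewrite -(Pp_sum A p) !big_cons !big_nil; congr (_ + (_ + (_ + _)));
by apply: eq_bigr => q _; case: (stepP A p k q).
Qed.

Lemma sum_aff (Q : finType) (R : realType) (P v : Q -> R) (a : R) :
  \sum_q P q * (a + v q) = a * \sum_q P q + \sum_q P q * v q.
Proof. rewrite big_distrr -big_split; apply: eq_bigr => q _ /=; ring. Qed.

Lemma step_compute (Q : finType) (R : realType) (A : pOC Q R) (v : Q -> R) p k (T : R) :
  \sum_(c <- next_counters k.+1) \sum_q step A (p, k.+1) (q, c) * (c%:R + v q - T)
  = k.+1%:R + drift A p + \sum_q Xmat A p q * v q - T.
Proof.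
rewrite /next_counters !big_cons big_nil addr0.
have e : forall (c : nat) (d : int), (forall q, step A (p, k.+1) (q, c) = Pp A p d q) ->
   \sum_q step A (p, k.+1) (q, c) * (c%:R + v q - T) =
   (c%:R - T) * \sum_q Pp A p d q + \sum_q Pp A p d q * v q.
  move=> c d H; rewrite -sum_aff; apply: eq_bigr => q _; rewrite H; congr (_ * _); ring.
rewrite (e k (-1)%Z); last by move=> q; case: (stepP A p k q).
rewrite (e k.+1 0%Z); last by move=> q; case: (stepP A p k q).
rewrite (e k.+2 1%Z); last by move=> q; case: (stepP A p k q).
have hs := Pp_sum A p; rewrite !big_cons big_nil addr0 in hs.
have hd : drift A p = - \sum_q Pp A p (-1)%Z q + \sum_q Pp A p 1%Z q.
  have h0 : \sum_q Pp A p 0%Z q * (0%Z)%:~R = 0 by rewrite big1 // => q _; rewrite mulr0.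
  rewrite /drift !big_cons big_nil addr0 h0 add0r.
  congr (_ + _); last by apply: eq_bigr => q _; rewrite mulr1.
  by rewrite -sumrN; apply: eq_bigr => q _; rewrite mulrN1.
have hx : \sum_q Xmat A p q * v q = \sum_q Pp A p (-1)%Z q * v q
    + \sum_q Pp A p 0%Z q * v q + \sum_q Pp A p 1%Z q * v q.
  rewrite -!big_split; apply: eq_bigr => q _ /=; rewrite /Xmat !big_cons big_nil; ring.
rewrite hd hx.
have -> : \sum_q Pp A p 0%Z q = 1 - \sum_q Pp A p (-1)%Z q - \sum_q Pp A p 1%Z q by lra.
rewrite -[k.+2]addn2 -[k.+1]addn1 !natrD; ring.
Qed.

Lemma mproc0 (Q : finType) (R : realType) x0 (v : Q -> R) t s :
  mproc x0 v t s 0 = ((nth (head x0 s) s 0).2)%:R + v (nth (head x0 s) s 0).1 - 0%:R * t.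
Proof. by []. Qed.

Lemma mprocS (Q : finType) (R : realType) x0 (v : Q -> R) t s i :
  mproc x0 v t s i.+1 =
  if all (fun j => 0 < (nth (head x0 s) s j).2)%N (iota 0 i.+1)
  then ((nth (head x0 s) s i.+1).2)%:R + v (nth (head x0 s) s i.+1).1 - i.+1%:R * t
  else mproc x0 v t s i.
Proof. by []. Qed.

Lemma nth_rc (Q : finType) (x0 : config Q) rest y j : (j <= size rest)%N ->
  nth (head x0 (rcons (x0 :: rest) y)) (rcons (x0 :: rest) y) j =
  nth (head x0 (x0 :: rest)) (x0 :: rest) j.
Proof. by move=> Hj; rewrite /= -rcons_cons nth_rcons /= ltnS Hj. Qed.

Lemma mproc_rcons (Q : finType) (R : realType) x0 (v : Q -> R) t rest y i :
  (i <= size rest)%N ->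
  mproc x0 v t (rcons (x0 :: rest) y) i = mproc x0 v t (x0 :: rest) i.
Proof.
elim: i => [|i IH] Hi; first by rewrite !mproc0 nth_rc.
rewrite !mprocS nth_rc // IH ?(ltnW Hi) //.
rewrite (@eq_in_all _ _ (fun j => 0 < (nth (head x0 (x0 :: rest)) (x0 :: rest) j).2)%N) //.
move=> j; rewrite mem_iota add0n => /andP[_ Hj] /=.
have Hj' : (j <= size rest)%N by lia.
by rewrite -rcons_cons nth_rcons /= ltnS Hj'.
Qed.

Lemma mproc_last (Q : finType) (R : realType) x0 (v : Q -> R) t rest y :
  mproc x0 v t (rcons (x0 :: rest) y) (size rest).+1 =
  if all (fun j => 0 < (nth x0 (x0 :: rest) j).2)%N (iota 0 (size rest).+1)
  then y.2%:R + v y.1 - (size rest).+1%:R * t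
  else mproc x0 v t (x0 :: rest) (size rest).
Proof.
rewrite mprocS mproc_rcons //.
have -> : nth (head x0 (rcons (x0 :: rest) y)) (rcons (x0 :: rest) y) (size rest).+1 = y.
  by rewrite nth_rcons /= ltnn eqxx.
rewrite (@eq_in_all _ _ (fun j => 0 < (nth x0 (x0 :: rest) j).2)%N) //.
move=> j; rewrite mem_iota add0n => /andP[_ Hj] /=.
have Hj' : (j <= size rest)%N by lia.
by rewrite -rcons_cons nth_rcons /= ltnS Hj'.
Qed.

Lemma alpha_path (Q : finType) (R : realType) (A : pOC Q R) (alpha : Q -> R) :
  invariant_distribution A alpha -> forall s a,
  path [rel a b | 0 < Xmat A a b] a s -> 0 < alpha a -> 0 < alpha (last a s).
Proof.
move=> [Ha0 [_ Hinv]]; elim=> [|b s IH] a //= /andP[Hab Hp] Ha; apply: IH => //.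
rewrite -Hinv (bigD1 a) //=; apply: (lt_le_trans (mulr_gt0 Ha Hab)); rewrite lerDl.
by apply: sumr_ge0 => r _; apply: mulr_ge0 => //; exact: Xmat_ge0.
Qed.

Theorem mainTheorem11 (Q : finType) (R : realType) (A : pOC Q R)
    (alpha : Q -> R) :
  strongly_connected A -> invariant_distribution A alpha ->
  let t := trend A alpha in
  exists v : Q -> R,
    (forall x0 : config Q, martingale_from A (fun i s => mproc x0 v t s i) x0) /\
    (forall p q : Q, v p - v q <= 2 * #|Q|%:R / xmin A ^+ #|Q|).
Proof.
move=> Hsc Hinvd t; have [Ha0 [Ha1 Hainv]] := Hinvd.
have [p1 Hp1] : exists p, 0 < alpha p.
  case: (pickP (fun p => 0 < alpha p)) => [p Hp|H]; first by exists p.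
  move: Ha1; rewrite big1 => [|p _]; first by move/eqP; rewrite eq_sym oner_eq0.
  by apply/eqP; rewrite eq_le Ha0 andbT leNgt H.
set q0 := p1.
pose w p := drift A p - t.
have [u [Huq Hu]] := poisson Hsc w q0.
have Hpois : forall p, u p = w p + \sum_r Xmat A p r * u r.
  move=> p; case: (eqVneq p q0) => [->|Hp]; last exact: Hu.
  pose e p := u p - (w p + \sum_r Xmat A p r * u r).
  have He : forall p, p != q0 -> e p = 0 by move=> p' Hp'; rewrite /e -Hu // subrr.
  have Hsum : \sum_p alpha p * e p = 0.
    have -> : \sum_p alpha p * e p = \sum_p alpha p * u p - \sum_p alpha p * w p
        - \sum_p \sum_r alpha p * (Xmat A p r * u r).
      rewrite -!sumrB; apply: eq_bigr => p' _; rewrite /e -big_distrr /=; ring.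
    have -> : \sum_p alpha p * w p = 0.
      rewrite /w; under eq_bigr do rewrite mulrBr; rewrite sumrB -big_distrl /= Ha1 mul1r.
      by rewrite /t /trend subrr.
    rewrite exchange_big /=.
    have -> : \sum_r \sum_p alpha p * (Xmat A p r * u r) = \sum_r alpha r * u r.
      apply: eq_bigr => r _; rewrite -Hainv big_distrl /=; apply: eq_bigr => p' _; ring.
    by rewrite subr0 subrr.
  have Hq0 : 0 < alpha q0.
    have [s Hs Hl] : exists2 s, path [rel a b | 0 < Xmat A a b] p1 s & q0 = last p1 s.
      exact/connectP/Hsc.
    by rewrite Hl; apply: alpha_path Hinvd _ _ Hs Hp1.
  move: Hsum; rewrite (bigD1 q0) //= big1 ?addr0 => [|p' Hp']; last by rewrite He ?mulr0.
  move/eqP; rewrite mulf_eq0 (gt_eqF Hq0) /= /e subr_eq0 => /eqP.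
  by rewrite Huq.
exists u; split.
  move=> x0 rest Hpath s x; rewrite {}/s {}/x.
  rewrite (eq_bigr (fun c => \sum_q step A (last x0 rest) (q, c) *
     (if all (fun j => 0 < (nth x0 (x0 :: rest) j).2)%N (iota 0 (size rest).+1)
      then c%:R + u q - (size rest).+1%:R * t
      else mproc x0 u t (x0 :: rest) (size rest)))); last first.
    by move=> c _; apply: eq_bigr => q _; rewrite mproc_last.
  case Hb: (all _ _).
  - have Hall : forall j, (j <= size rest)%N -> (0 < (nth x0 (x0 :: rest) j).2)%N.
      move=> j Hj; move/allP: Hb; apply; rewrite mem_iota add0n ltnS Hj.
      by [].
    have Hlast : nth x0 (x0 :: rest) (size rest) = last x0 rest.
      exact: (nth_last x0 (x0 :: rest)).
    have Hm : mproc x0 u t (x0 :: rest) (size rest) =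
        ((last x0 rest).2)%:R + u (last x0 rest).1 - (size rest)%:R * t.
      case Hn: (size rest) => [|m]; first by rewrite mproc0 -Hn Hlast.
      rewrite -Hlast Hn mprocS ifT //.
      apply/allP => j; rewrite mem_iota add0n => Hj; apply: Hall; lia.
    rewrite Hm.
    have := Hall _ (leqnn _); rewrite Hlast.
    case: (last x0 rest) => p [|k] //= _.
    rewrite step_compute (Hpois p) /w -addn1 natrD; ring.
  - rewrite (eq_bigr (fun c => (\sum_q step A (last x0 rest) (q, c)) *
       mproc x0 u t (x0 :: rest) (size rest))); last by move=> c _; rewrite big_distrl.
    by rewrite -big_distrl /= step_sum mul1r.
have Ht : `|t| <= 1.
  rewrite /t /trend; apply: le_trans (ler_norm_sum _ _ _) _.
  rewrite -Ha1; apply: ler_sum => p _; rewrite normrM ger0_norm //.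
  by rewrite ler_piMr // drift_le1.
move=> p q.
pose z r := u r - u q.
have := @maxp _ _ A Hsc z q 2 (ler0n _ 2) (subrr _) _ p; apply.
move=> p' _; rewrite /z (Hpois p').
have -> : \sum_r Xmat A p' r * (u r - u q) = \sum_r Xmat A p' r * u r - u q.
  by under eq_bigr do rewrite mulrBr; rewrite sumrB -big_distrl /= Xmat_sum mul1r.
have := drift_le1 A p'; rewrite /w !ler_norml => /andP[h1 h2].
move: Ht; rewrite ler_norml => /andP[h3 h4]; lra.
Qed.
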